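(* Every $t$-PLS which verifies $\textsc{acyclic}$ requires labels of size $\Omega((\log n)/t)$, where $n$ is the number of vertices.
   Context: $\textsc{acyclic}$ is the predicate on the family of all connected graph configurations (graph $G=(V,E)$ with state assignment $\varphi:V\to S$) that is true iff the underlying graph is cycle free. A $t$-round proof-labeling scheme ($t$-PLS) consists of a prover assigning a bit string (label) to each vertex and a deterministic distributed verifier running $t$ synchronous rounds (in each round every vertex receives messages from all neighbors, computes, and sends messages), after which each vertex outputs true or false; it must be complete (acyclic configurations are accepted, i.e. all vertices output true, with the prover's labels) and sound (configurations with a cycle are rejected by some vertex under every labeling). Vertices may have unique identifiers and labels may depend on them. Label size is the maximum label length assigned by the prover on legal configurations. *)

(* Defs.v *)
From mathcomp Require Import all_boot.


Record config (S : Type) := Config {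
  nv : nat;
  adj : rel 'I_nv;
  state : 'I_nv -> S;
  ident : 'I_nv -> nat }.
Arguments nv {S} c.
Arguments adj {S} c _ _.
Arguments state {S} c _.
Arguments ident {S} c _.

Definition well_formed {S} (G : config S) : Prop :=
  [/\ 0 < nv G, symmetric (adj G), irreflexive (adj G),
      injective (ident G) & forall u v, connect (adj G) u v].

Definition has_cycle {S} (G : config S) : Prop :=
  exists p : seq 'I_(nv G), [/\ 3 <= size p, uniq p & cycle (adj G) p].

Definition acyclic {S} (G : config S) : Prop := ~ has_cycle G.

Definition labeling {S} (G : config S) := 'I_(nv G) -> seq bool.

(* the prover: assigns labels to every configuration (only used on legal ones) *)
Definition prover (S : Type) := forall G : config S, labeling G.

(* a deterministic synchronous distributed algorithm (LOCAL model):
   local state type vQ, message type vM; initial state from own id, own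
   state and own label; each round every vertex sends a message to all its
   neighbours, receives the messages of all neighbours (listed in increasing
   order of sender identifier) and updates; finally outputs a boolean. *)
Record verifier (S : Type) := Verifier {
  vQ : Type;
  vM : Type;
  vinit : nat -> S -> seq bool -> vQ;
  vsend : vQ -> vM;
  vupdate : vQ -> seq vM -> vQ;
  vout : vQ -> bool }.
Arguments vQ {S} v.
Arguments vM {S} v.
Arguments vinit {S} v _ _ _.
Arguments vsend {S} v _.
Arguments vupdate {S} v _ _.
Arguments vout {S} v _.

Definition nbrs {S} (G : config S) (v : 'I_(nv G)) : seq 'I_(nv G) :=
  sort (fun u w => ident G u <= ident G w) [seq u <- enum 'I_(nv G) | adj G v u].

Fixpoint run {S} (A : verifier S) (G : config S) (lab : labeling G) (k : nat)
  : 'I_(nv G) -> vQ A :=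
  match k with
  | 0 => fun v => vinit A (ident G v) (state G v) (lab v)
  | k'.+1 => fun v => vupdate A (run A G lab k' v)
                        [seq vsend A (run A G lab k' u) | u <- nbrs G v]
  end.

Definition output {S} (A : verifier S) (G : config S) (lab : labeling G) (t : nat)
  (v : 'I_(nv G)) : bool := vout A (run A G lab t v).

Definition tPLS_acyclic {S} (t : nat) (P : prover S) (A : verifier S) : Prop :=
  (forall G : config S, well_formed G -> acyclic G ->
     forall v, output A G (P G) t v) /\
  (forall G : config S, well_formed G -> has_cycle G ->
     forall lab : labeling G, exists v, ~~ output A G lab t v).

(* Main.v *)
Require Import Defs.
From mathcomp Require Import all_boot.
From mathcomp Require Import zify.
From Stdlib Require Import Classical ClassicalEpsilon.
From Stdlib Require List.

Set Implicit Arguments.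
Unset Strict Implicit.
Unset Printing Implicit Defensive.


Section Local.
Variables (S : Type) (A : verifier S) (G1 G2 : config S)
  (l1 : labeling G1) (l2 : labeling G2).

Fixpoint sim (k : nat) (u : 'I_(nv G1)) (u' : 'I_(nv G2)) : Prop :=
  match k with
  | 0 => [/\ ident G1 u = ident G2 u', state G1 u = state G2 u' & l1 u = l2 u']
  | k'.+1 => sim k' u u' /\ List.Forall2 (sim k') (nbrs G1 u) (nbrs G2 u')
  end.

Lemma sim_run k u u' : sim k u u' -> run A G1 l1 k u = run A G2 l2 k u'.
Proof.
elim: k u u' => [|k IH] u u' /=.
  by case=> -> -> ->.
case=> Hs HF; rewrite (IH _ _ Hs); congr vupdate.
elim: HF => //= x y s1 s2 Hxy _ ->; by rewrite (IH _ _ Hxy).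
Qed.

Lemma sim_local (f : 'I_(nv G1) -> 'I_(nv G2)) (R : nat -> 'I_(nv G1) -> Prop) :
  (forall v, R 0 v -> [/\ ident G1 v = ident G2 (f v), state G1 v = state G2 (f v)
                        & l1 v = l2 (f v)]) ->
  (forall k v, R k.+1 v -> [/\ R k v, (forall u, adj G1 v u -> R k u)
                        & nbrs G2 (f v) = map f (nbrs G1 v)]) ->
  forall k v, R k v -> sim k v (f v).
Proof.
move=> H0 HS; elim=> [|k IH] v /=; first exact: H0.
case/HS=> Rk Ru ->; split; first exact: IH.
have: forall u, u \in nbrs G1 v -> R k u.
  by move=> u; rewrite mem_sort mem_filter => /andP[/Ru].
elim: (nbrs G1 v) => [|x s IHs] Hin /=; first by constructor.
constructor; first by apply: IH; apply: Hin; rewrite inE eqxx.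
by apply: IHs => u Hu; apply: Hin; rewrite inE Hu orbT.
Qed.
End Local.

Lemma nbrs_map S (G1 G2 : config S) (f : 'I_(nv G1) -> 'I_(nv G2)) v :
  injective (ident G1) -> injective (ident G2) ->
  (forall u, adj G1 v u -> adj G2 (f v) (f u) /\ ident G2 (f u) = ident G1 u) ->
  (forall u2, adj G2 (f v) u2 -> exists2 u, adj G1 v u & f u = u2) ->
  nbrs G2 (f v) = map f (nbrs G1 v).
Proof.
move=> inj1 inj2 Hf Hb; rewrite /nbrs.
set le2 := (fun u w : 'I_(nv G2) => ident G2 u <= ident G2 w).
set le1 := (fun u w : 'I_(nv G1) => ident G1 u <= ident G1 w).
have tot2 : total le2 by move=> x y; exact: leq_total.
have tr2 : transitive le2 by move=> x y z; exact: leq_trans.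
have as2 : antisymmetric le2.
  by move=> x y /andP[h1 h2]; apply: inj2; apply/eqP; rewrite eqn_leq; apply/andP.
have tot1 : total le1 by move=> x y; exact: leq_total.
set s1 := [seq u <- enum 'I_(nv G1) | adj G1 v u].
have Hs1 : forall u, u \in s1 -> adj G1 v u by move=> u; rewrite mem_filter => /andP[].
have srt : sorted le2 (map f (sort le1 s1)).
  rewrite sorted_map; apply: (@sub_in_sorted _ (mem s1) le1).
  - move=> x y Hx Hy; rewrite /relpre /le2 /le1 /=.
    by rewrite (Hf _ (Hs1 _ Hx)).2 (Hf _ (Hs1 _ Hy)).2.
  - by apply/allP=> x; rewrite mem_sort.
  - exact: sort_sorted.
rewrite -(sorted_sort tr2 srt); apply/perm_sortP => //.
apply: uniq_perm.
- by rewrite filter_uniq // enum_uniq.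
- rewrite map_inj_in_uniq; first by rewrite sort_uniq filter_uniq // enum_uniq.
  move=> x y; rewrite !mem_sort => Hx Hy Hxy; apply: inj1.
  by rewrite -(Hf _ (Hs1 _ Hx)).2 -(Hf _ (Hs1 _ Hy)).2 Hxy.
- move=> u2; rewrite mem_filter mem_enum andbT; apply/idP/idP.
  + by case/Hb=> u Hu <-; apply: map_f; rewrite mem_sort mem_filter Hu mem_enum.
  + by case/mapP=> u; rewrite mem_sort => /Hs1 /Hf [H _] ->.
Qed.


Definition sinc (g : nat -> nat) := forall a, g a < g a.+1.

Lemma sinc_lt g : sinc g -> forall a b, a < b -> g a < g b.
Proof.
move=> Hg a b; elim: b => // b IH; rewrite ltnS leq_eqVlt => /orP[/eqP->|/IH H].
  exact: Hg.
exact: ltn_trans H (Hg b).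
Qed.

Lemma sinc_ltr g : sinc g -> forall a b, g a < g b -> a < b.
Proof.
move=> Hg a b H; rewrite ltnNge; apply/negP; rewrite leq_eqVlt => /orP[/eqP E|/(sinc_lt Hg) H2].
  by move: H; rewrite E ltnn.
by move: (ltn_trans H H2); rewrite ltnn.
Qed.

Definition eps {T} (x : T) (P : T -> Prop) := epsilon (inhabits x) P.
Lemma eps_spec {T} (x : T) (P : T -> Prop) : (exists y, P y) -> P (eps x P).
Proof. exact: epsilon_spec. Qed.

Lemma inf_pigeon (C : finType) (cc : nat -> C) :
  exists c, forall N, exists2 k, N <= k & cc k = c.
Proof.
apply: NNPP => Hn.
have Hc : forall c, exists N, forall k, N <= k -> cc k <> c.
  move=> c; apply: NNPP => H1; apply: Hn; exists c => N; apply: NNPP => H2.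
  by apply: H1; exists N => k Hk Hck; apply: H2; exists k.
pose Nf c := eps 0 (fun N => forall k, N <= k -> cc k <> c).
pose M := \max_(c : C) Nf c.
have := @eps_spec _ 0 _ (Hc (cc M)) M; apply => //.
exact: (leq_bigmax (cc M)).
Qed.

Theorem ramsey (C : finType) r (col : seq nat -> C) :
  exists h, sinc h /\ exists c, forall s, size s = r -> sorted ltn s -> col (map h s) = c.
Proof.
elim: r col => [|r IH] col.
  exists id; split; first by move=> a.
  by exists (col [::]) => -[|//] _ _.
have F : forall g : nat -> nat, exists hc : (nat -> nat) * C, sinc hc.1 /\
   forall s, size s = r -> sorted ltn s ->
     col (g 0 :: map (fun a => g (hc.1 a).+1) s) = hc.2.
  move=> g; have [h [Hh [c Hc]]] := IH (fun s => col (g 0 :: map (fun a => g a.+1) s)).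
  exists (h, c); split => //= s Hs Hso; rewrite -(Hc s Hs Hso); congr col; congr cons.
  by rewrite -map_comp.
pose hc g := eps (id, col [::]) (fun hc : (nat -> nat) * C => sinc hc.1 /\
   forall s, size s = r -> sorted ltn s ->
     col (g 0 :: map (fun a => g (hc.1 a).+1) s) = hc.2).
have hcP : forall g, sinc (hc g).1 /\ forall s, size s = r -> sorted ltn s ->
     col (g 0 :: map (fun a => g ((hc g).1 a).+1) s) = (hc g).2.
  move=> g; exact: (@eps_spec _ (id, col [::]) _ (F g)).
pose step g := fun a => g ((hc g).1 a).+1.
pose gs k := iter k step id.
pose x k := gs k 0.
pose cc k := (hc (gs k)).2.
have gsS : forall k, gs k.+1 = step (gs k) by [].
have sgs : forall k, sinc (gs k).
  elim=> [|k IHk] a; first by [].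
  rewrite gsS /step; apply: (sinc_lt IHk); rewrite ltnS.
  exact: (hcP (gs k)).1.
have Hb : forall j k, exists psi, sinc psi /\ forall a, gs (j + k) a = gs k (psi a).
  elim=> [|j IHj] k; first by exists id; split => // a.
  have [psi [Hpsi Hp]] := IHj k.
  exists (fun a => psi ((hc (gs (j + k))).1 a).+1); split.
    move=> a; apply: (sinc_lt Hpsi); rewrite ltnS; exact: (hcP _).1.
  by move=> a; rewrite addSn gsS /step Hp.
have Hx : forall k k', k < k' -> exists a, x k' = gs k.+1 a.
  move=> k k' Hk; have [psi [_ Hp]] := Hb (k' - k.+1) k.+1.
  by exists (psi 0); rewrite /x -Hp subnK.
have sx : sinc x.
  move=> k; rewrite /x gsS /step; exact: (sinc_lt (sgs k)).
pose idx k k' := eps 0 (fun a => x k' = gs k.+1 a).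
have idxP : forall k k', k < k' -> x k' = gs k.+1 (idx k k').
  by move=> k k' Hk; apply: (@eps_spec _ 0 (fun a => x k' = gs k.+1 a)); apply: Hx.
have Hd : forall k ks, size ks = r -> sorted ltn ks -> all (fun k' => k < k') ks ->
     col (x k :: map x ks) = cc k.
  move=> k ks Hs Hso Hall.
  have E : map x ks = map (fun a => gs k ((hc (gs k)).1 a).+1) (map (idx k) ks).
    rewrite -map_comp; apply/eq_in_map => k' Hk' /=.
    by rewrite (idxP k k' (allP Hall k' Hk')).
  rewrite E; apply: (hcP (gs k)).2; first by rewrite size_map.
  rewrite sorted_map; apply: (sub_in_sorted _ Hall Hso).
  move=> a b Ha Hb' Hab; rewrite /relpre; apply: (sinc_ltr (sgs k.+1)).
  by rewrite -(idxP _ _ Ha) -(idxP _ _ Hb'); apply: sinc_lt.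
have [c Hc] := inf_pigeon cc.
pose nextc N := eps 0 (fun k => N <= k /\ cc k = c).
have nextcP : forall N, N <= nextc N /\ cc (nextc N) = c.
  move=> N; apply: (@eps_spec _ 0 (fun k => N <= k /\ cc k = c)); have [k Hk Hk'] := Hc N; by exists k.
pose e a := iter a (fun m => nextc m.+1) (nextc 0).
have se : sinc e by move=> a; exact: (nextcP _).1.
have ce : forall a, cc (e a) = c.
  by case=> [|a]; [exact: (nextcP _).2|exact: (nextcP _).2].
exists (fun a => x (e a)); split.
  by move=> a; apply: (sinc_lt sx); apply: se.
exists c => -[//|a0 s] /= [Hs] Hso.
have -> : map (fun a => x (e a)) s = map x (map e s) by rewrite -map_comp.
rewrite -(ce a0); apply: Hd.
- by rewrite size_map.
- rewrite sorted_map; apply: (sub_sorted _ (path_sorted Hso)).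
  by move=> a b; apply: sinc_lt.
- rewrite all_map; apply/allP => a Ha /=; apply: (sinc_lt se).
  have := order_path_min ltn_trans Hso; move/allP; exact.
Qed.


Lemma next_nth_mod (T : eqType) (p : seq T) x0 i : uniq p -> i < size p ->
  next p (nth x0 p i) = nth x0 p (i.+1 %% size p).
Proof.
move=> Hu Hi; rewrite next_nth mem_nth //.
case: p Hu Hi => [//|y p'] Hu Hi; rewrite index_uniq //=.
move: Hi; rewrite /= ltnS leq_eqVlt => /orP[/eqP->|Hi].
  by rewrite modnn nth_default.
rewrite modn_small ?ltnS //=; exact: set_nth_default.
Qed.

Lemma exists_max (N : nat) (p : seq 'I_N) : p != [::] ->
  exists2 x, x \in p & forall y, y \in p -> val y <= val x.
Proof.
elim: p => [//|a p IH] _.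
case: (altP (p =P [::])) => [->|Hp].
  by exists a; rewrite ?inE ?eqxx // => y; rewrite inE => /eqP->.
have [x Hx Hm] := IH Hp.
case: (leqP (val a) (val x)) => Ha.
  exists x; first by rewrite inE Hx orbT.
  by move=> y; rewrite inE => /orP[/eqP->//|/Hm].
exists a; first by rewrite inE eqxx.
move=> y; rewrite inE => /orP[/eqP->//|/Hm H]; exact: (leq_trans H (ltnW Ha)).
Qed.

Lemma lin_acyclic S (G : config S) :
  (forall u v, adj G u v -> (val u).+1 = val v \/ (val v).+1 = val u) -> acyclic G.
Proof.
move=> Hl [p [Hs Hu Hc]].
have [x Hx Hm] : exists2 x, x \in p & forall y, y \in p -> val y <= val x.
  by apply: exists_max; case: p Hs {Hu Hc}.
have Hn := next_cycle Hc Hx; have Hp := prev_cycle Hc Hx.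
have Hn1 := Hm _ (etrans (mem_next p x) Hx); have Hp1 := Hm _ (etrans (mem_prev p x) Hx).
have E : next p x = prev p x.
  apply: val_inj; case: (Hl _ _ Hn) => H1; case: (Hl _ _ Hp) => H2; move: Hn1 Hp1 H1 H2; set a := val (next p x); set b := val (prev p x); set c := val x; move=> *; lia.
have E2 : next p (next p x) = x by rewrite E next_prev.
pose i := index x p.
have Hi : i < size p by rewrite index_mem.
have Ex : nth x p i = x by rewrite nth_index.
have E3 : next p (next p (nth x p i)) = nth x p i by rewrite Ex.
move: E3; rewrite next_nth_mod // next_nth_mod ?ltn_mod; last by case: (size p) Hs.
move/eqP; rewrite nth_uniq ?ltn_mod //; try by case: (size p) Hs.
move/eqP => H.
case: (ltnP i.+1 (size p)) => H1.
  move: H; rewrite (modn_small H1).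
  case: (ltnP i.+2 (size p)) => H2; first by rewrite modn_small //; lia.
  have -> : i.+2 = size p by lia.
  rewrite modnn; lia.
have Hs1 : i.+1 = size p by lia.
move: H; rewrite Hs1 modnn modn_small //; move: Hs; rewrite -Hs1; lia.
all: exact: Hu.
Qed.


Definition padj N : rel 'I_N := fun u v => ((nat_of_ord u).+1 == nat_of_ord v) || ((nat_of_ord v).+1 == nat_of_ord u).
Definition cnat N : rel nat := fun a b =>
  [|| a.+1 == b, b.+1 == a, (a == 0) && (b == N.-1) | (b == 0) && (a == N.-1)].
Definition cadj N : rel 'I_N := fun u v => cnat N (nat_of_ord u) (nat_of_ord v).

Lemma padj_sym N : symmetric (@padj N).
Proof. by move=> u v; rewrite /padj orbC. Qed.
Lemma cadj_sym N : symmetric (@cadj N).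
Proof.
move=> u v; rewrite /cadj /cnat; case: (_.+1 == _); case: (_.+1 == _) => //=.
by case: (val u == 0); case: (val v == 0); rewrite //= orbC.
Qed.

Lemma lin_connect N (e : rel 'I_N.+1) : symmetric e ->
  (forall k : 'I_N.+1, k < N -> e k (inord k.+1)) -> forall u v, connect e u v.
Proof.
move=> Hs He.
have H0 : forall k, k <= N -> connect e ord0 (inord k).
  elim=> [|k IH] Hk.
    by have -> : (inord 0 : 'I_N.+1) = ord0 by apply/val_inj; rewrite /= inordK.
  apply: (connect_trans (IH (ltnW Hk))); apply: connect1.
  have := He (inord k); rewrite inordK ?ltnS ?(ltnW Hk) //; exact.
move=> u v; apply: (@connect_trans _ _ ord0).
  rewrite (sym_connect_sym Hs) -(inord_val u); apply: H0; rewrite -ltnS; exact: ltn_ord.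
rewrite -(inord_val v); apply: H0; rewrite -ltnS; exact: ltn_ord.
Qed.

Lemma padj_wf S N (st : 'I_N.+1 -> S) (id : 'I_N.+1 -> nat) :
  injective id -> well_formed (@Config S N.+1 (@padj N.+1) st id).
Proof.
move=> Hi; split => //=.
- exact: padj_sym.
- by move=> u; rewrite /padj; apply/negP; case/orP => /eqP; lia.
- apply: lin_connect; first exact: padj_sym.
  by move=> k Hk; rewrite /padj /= inordK ?eqxx.
Qed.

Lemma padj_acyclic S N (st : 'I_N -> S) (id : 'I_N -> nat) :
  acyclic (@Config S N (@padj N) st id).
Proof.
apply: lin_acyclic => u v /=; rewrite /padj => /orP[/eqP->|/eqP->]; by [left|right].
Qed.

Lemma cadj_wf S N (st : 'I_N.+1 -> S) (id : 'I_N.+1 -> nat) :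
  1 < N -> injective id -> well_formed (@Config S N.+1 (@cadj N.+1) st id).
Proof.
move=> HN Hi; split => //=.
- exact: cadj_sym.
- move=> u; rewrite /cadj /cnat /=; apply/negP.
  move=> H; have := ltn_ord u; move: H; case/or4P=> [/eqP|/eqP|/andP[/eqP ? /eqP]|/andP[/eqP ? /eqP]]; lia.
- apply: lin_connect; first exact: cadj_sym.
  by move=> k Hk; rewrite /cadj /cnat /= inordK ?eqxx.
Qed.

Lemma path_iota (x b k : nat) : x.+1 = b -> path (fun a c => a.+1 == c) x (iota b k).
Proof.
elim: k x b => [//|k IH] x b Hb /=; rewrite Hb eqxx /=; exact: IH.
Qed.

Lemma last_iota x b k : last x (iota b k) = if k is 0 then x else b + k.-1.
Proof. elim: k x b => [//|k IH] x b /=; rewrite IH; case: k {IH} => /= [|k]; lia. Qed.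

Lemma cadj_cycle S N (st : 'I_N.+1 -> S) (id : 'I_N.+1 -> nat) :
  1 < N -> has_cycle (@Config S N.+1 (@cadj N.+1) st id).
Proof.
move=> HN; exists (enum 'I_N.+1); split => /=.
- by rewrite size_enum_ord.
- exact: enum_uniq.
- rewrite /cadj -(@cycle_map _ _ val (cnat N.+1)) val_enum_ord /=.
  rewrite rcons_path last_iota; apply/andP; split.
    apply: (@sub_path _ (fun a c => a.+1 == c)); first by move=> a c H; rewrite /cnat H.
    exact: path_iota.
  rewrite /cnat; apply/or4P; constructor 4; apply/andP; split => //; apply/eqP.
  clear st id; case: N HN => [//|N] HN /=; lia.
Qed.

Lemma local_nbrs S (Z G : config S) (f : 'I_(nv Z) -> 'I_(nv G)) v :
  injective (ident Z) -> injective (ident G) -> 2 < nv Z ->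
  (forall a b, adj Z a b = cadj a b) -> (forall a b, adj G a b = padj a b) ->
  (forall u, nat_of_ord u = (if (nat_of_ord v).+1 == nv Z then 0 else (nat_of_ord v).+1) ->
     nat_of_ord (f u) = (nat_of_ord (f v)).+1 /\ ident G (f u) = ident Z u) ->
  (forall u, nat_of_ord u = (if nat_of_ord v == 0 then (nv Z).-1 else (nat_of_ord v).-1) ->
     (nat_of_ord (f u)).+1 = nat_of_ord (f v) /\ ident G (f u) = ident Z u) ->
  nbrs G (f v) = map f (nbrs Z v).
Proof.
move=> iZ iG HZ aZ aG Hn Hp; rewrite -!subn1 in Hp; apply: nbrs_map => //.
- move=> u; rewrite aZ aG /cadj /cnat /padj -!subn1 => H.
  have Hu := ltn_ord u; have Hv := ltn_ord v.
  case/or4P: H => [/eqP H|/eqP H|/andP[/eqP H1 /eqP H2]|/andP[/eqP H1 /eqP H2]].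
  + have [E1 E2] : nat_of_ord (f u) = (nat_of_ord (f v)).+1 /\ ident G (f u) = ident Z u.
      by apply: Hn; case: eqP => E; [lia|].
    by rewrite E1 eqxx.
  + have [E1 E2] : (nat_of_ord (f u)).+1 = nat_of_ord (f v) /\ ident G (f u) = ident Z u.
      by apply: Hp; case: eqP => E; lia.
    by rewrite E1 eqxx orbT.
  + have [E1 E2] : (nat_of_ord (f u)).+1 = nat_of_ord (f v) /\ ident G (f u) = ident Z u.
      by apply: Hp; case: eqP => E; lia.
    by rewrite E1 eqxx orbT.
  + have [E1 E2] : nat_of_ord (f u) = (nat_of_ord (f v)).+1 /\ ident G (f u) = ident Z u.
      by apply: Hn; case: eqP => E; lia.
    by rewrite E1 eqxx.
- move=> u2; rewrite aG /padj => /orP[/eqP H|/eqP H].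
  + have Hx : (if (nat_of_ord v).+1 == nv Z then 0 else (nat_of_ord v).+1) < nv Z.
      have := ltn_ord v; case: eqP => E; lia.
    exists (Ordinal Hx).
      rewrite aZ /cadj /cnat /= -!subn1; have := ltn_ord v; case: ((nat_of_ord v).+1 =P nv Z) => E Hv.
        by apply/or4P; constructor 4; apply/andP; split => //; apply/eqP; lia.
      by apply/or4P; constructor 1.
    by apply: ord_inj; rewrite (Hn (Ordinal Hx) erefl).1.
  + have Hx : (if nat_of_ord v == 0 then (nv Z) - 1 else (nat_of_ord v) - 1) < nv Z.
      have := ltn_ord v; case: eqP => E; lia.
    exists (Ordinal Hx).
      rewrite aZ /cadj /cnat /= -!subn1; have := ltn_ord v; case: (nat_of_ord v =P 0) => E Hv.
        by apply/or4P; constructor 3; apply/andP; split => //; apply/eqP; lia.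
      by apply/or4P; constructor 2; apply/eqP; lia.
    by apply: ord_inj; apply/eqP; rewrite -eqSS (Hp (Ordinal Hx) erefl).1 H.
Qed.


Definition pid (n t r : nat) (s : seq nat) (k : nat) : nat :=
  if (k < 4*t*r) && (2*t <= k %% (4*t))
  then n + nth 0 s (k %/ (4*t)) * (2*t) + (k %% (4*t) - 2*t) else k.

Lemma mod4 t z e : 0 < t -> e < 4*t -> (4*t*z + e) %% (4*t) = e /\ (4*t*z + e) %/ (4*t) = z.
Proof.
move=> Ht He; rewrite [4*t*z]mulnC; split.
  by rewrite modnMDl modn_small.
by rewrite divnMDl ?divn_small ?addn0 //; lia.
Qed.

Lemma pid_slot n t r s z o : 0 < t -> z < r -> o < 2*t ->
  pid n t r s (4*t*z + 2*t + o) = n + nth 0 s z * (2*t) + o.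
Proof.
move=> Ht Hz Ho; rewrite /pid -addnA; have [E1 E2] := @mod4 t z (2*t + o) Ht ltac:(lia).
rewrite E1 E2 leq_addr andbT.
have -> : 4*t*z + (2*t + o) < 4*t*r.
  have : 4*t*z.+1 <= 4*t*r by rewrite leq_mul2l Hz orbT.
  rewrite mulnS; lia.
by congr (_ + _); lia.
Qed.

Lemma pid_fill n t r s z e : 0 < t -> e < 2*t ->
  pid n t r s (4*t*z + e) = 4*t*z + e.
Proof.
move=> Ht He; rewrite /pid; have [E1 E2] := @mod4 t z e Ht ltac:(lia).
by rewrite E1 [2*t <= e]leqNgt He andbF.
Qed.

Lemma divmod_uniq d b1 o1 b2 o2 : o1 < d -> o2 < d -> b1 * d + o1 = b2 * d + o2 -> b1 = b2 /\ o1 = o2.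
Proof.
move=> H1 H2 E; have Hd : 0 < d by lia.
have E1 : (b1 * d + o1) %/ d = b1 by rewrite divnMDl // divn_small // addn0.
have E2 : (b1 * d + o1) %% d = o1 by rewrite modnMDl modn_small.
by rewrite E in E1 E2; rewrite divnMDl // divn_small // addn0 in E1; rewrite modnMDl modn_small in E2.
Qed.

Lemma pid_inj n' t r s : 0 < t -> 4*t*r <= n'.+1 ->
  (forall z1 z2, z1 < r -> z2 < r -> nth 0 s z1 = nth 0 s z2 -> z1 = z2) ->
  injective (fun k : 'I_n'.+1 => pid n'.+1 t r s k).
Proof.
move=> Ht Hn Hs k1 k2; rewrite /pid.
have Hk1 := ltn_ord k1; have Hk2 := ltn_ord k2.
case: ifP => /andP; case: ifP => /andP.
- move=> [A2 B2] [A1 B1] E; apply: ord_inj.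
  have Hm1 := ltn_pmod k1 (ltac:(lia) : 0 < 4*t); have Hm2 := ltn_pmod k2 (ltac:(lia) : 0 < 4*t).
  have [Eb Eo] := @divmod_uniq (2*t) (nth 0 s (k1 %/ (4*t))) (k1 %% (4*t) - 2*t)
     (nth 0 s (k2 %/ (4*t))) (k2 %% (4*t) - 2*t) ltac:(lia) ltac:(lia) ltac:(move: E; lia).
  have Hz : nat_of_ord k1 %/ (4*t) = nat_of_ord k2 %/ (4*t).
    apply: Hs => //; rewrite ltn_divLR; lia.
  rewrite (divn_eq k1 (4*t)) (divn_eq k2 (4*t)) Hz; lia.
- by move=> _ [A1 B1] E; lia.
- by move=> [A2 B2] _ E; lia.
- by move=> _ _ E; apply: ord_inj.
Qed.

Definition ctype L := ('I_L.+1 * {ffun 'I_L -> bool})%type.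
Definition code L (b : seq bool) : ctype L := (inord (size b), [ffun i : 'I_L => nth false b i]).

Lemma code_inj L b1 b2 : size b1 <= L -> size b2 <= L -> code L b1 = code L b2 -> b1 = b2.
Proof.
move=> H1 H2 [Es Ef].
have Es' : size b1 = size b2.
  by move: (congr1 val Es); rewrite /= !inordK // ltnS.
apply: (eq_from_nth (x0 := false) Es') => i Hi.
have Hi' : i < L by apply: leq_trans H1.
have := congr1 (fun f : {ffun 'I_L -> bool} => f (Ordinal Hi')) Ef; rewrite !ffunE /=; exact.
Qed.

Definition Ycfg S (s0 : S) n' t r (s : seq nat) : config S :=
  @Config S n'.+1 (@padj n'.+1) (fun _ => s0) (fun k => pid n'.+1 t r s k).

Lemma cnat_cases M a b : cnat M a b ->
  b = a.+1 \/ a = b.+1 \/ (a = 0 /\ b = M - 1) \/ (b = 0 /\ a = M - 1).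
Proof.
rewrite /cnat -!subn1; case/or4P=> [/eqP|/eqP|/andP[/eqP ? /eqP]|/andP[/eqP ? /eqP]];
  move=> *; [left|right; left|right; right; left|right; right; right]; by [].
Qed.


Lemma main_contra S (s0 : S) t (P : prover S) (A : verifier S) n' L0 :
  0 < t -> tPLS_acyclic t P A ->
  (forall G : config S, nv G = n'.+1 -> well_formed G -> acyclic G ->
     forall v, size (P G v) <= L0) ->
  4*t*(#|{ffun 'I_(2*t) -> ctype L0}|.+1) <= n'.+1 -> False.
Proof.
move=> Ht [Hcompl Hsound] Hbound Hn.
set r := #|{ffun 'I_(2*t) -> ctype L0}|.+1 in Hn.
pose Y s := Ycfg s0 n' t r s.
pose col (s : seq nat) : {ffun 'I_n'.+1 -> ctype L0} := [ffun k => code L0 (P (Y s) k)].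
have [h [Hh [c Hc]]] := ramsey r col.
pose W (z : 'I_r) : {ffun 'I_(2*t) -> ctype L0} :=
  [ffun o : 'I_(2*t) => c (inord (4*t*z + 2*t + o))].
have [i [j [Hij HW]]] : exists i j : 'I_r, i < j /\ W i = W j.
  have : ~~ injectiveb W.
    apply/negP => /injectiveP Hi; have := leq_card _ Hi; rewrite card_ord /r ltnn //.
  case/injectivePn => z1 [z2 Hne HW].
  case: (ltngtP z1 z2) => H.
  - by exists z1, z2.
  - by exists z2, z1.
  - by move: Hne; rewrite (ord_inj H) eqxx.
have Hjr := ltn_ord j.
set d := j - i.
have Ed : d = j - i by [].
pose sX := map h (iota d r); pose sX' := map h (iota 0 r).
have nthS : forall a z, z < r -> nth 0 (map h (iota a r)) z = h (a + z).
  by move=> a z Hz; rewrite (nth_map 0) ?size_iota // nth_iota.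
have distS : forall a z1 z2, z1 < r -> z2 < r ->
    nth 0 (map h (iota a r)) z1 = nth 0 (map h (iota a r)) z2 -> z1 = z2.
  move=> a z1 z2 H1 H2; rewrite !nthS //.
  case: (ltngtP z1 z2) => // H E.
  - by have := sinc_lt Hh (ltac:(lia) : a + z1 < a + z2); rewrite E ltnn.
  - by have := sinc_lt Hh (ltac:(lia) : a + z2 < a + z1); rewrite E ltnn.
pose X := Y sX; pose X' := Y sX'.
have wfY : forall a, well_formed (Y (map h (iota a r))).
  by move=> a; apply: padj_wf; apply: pid_inj => //; apply: distS.
have acY : forall a, acyclic (Y (map h (iota a r))) by move=> a; apply: padj_acyclic.
have colY : forall a, col (map h (iota a r)) = c.
  by move=> a; apply: Hc; rewrite ?size_iota // iota_ltn_sorted.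
have bndY : forall a (k : 'I_n'.+1), size (P (Y (map h (iota a r))) k) <= L0.
  by move=> a k; apply: Hbound.
have LX : forall k : 'I_n'.+1, P X' k = P X k.
  move=> k; apply: code_inj; try exact: bndY.
  have := congr1 (fun f : {ffun 'I_n'.+1 -> ctype L0} => f k) (colY 0).
  have := congr1 (fun f : {ffun 'I_n'.+1 -> ctype L0} => f k) (colY d).
  by rewrite !ffunE => -> ->.
have LP : forall o, o < 2*t ->
    P X (inord (4*t*j + 2*t + o)) = P X (inord (4*t*i + 2*t + o)).
  move=> o Ho; apply: code_inj; try exact: bndY.
  have := congr1 (fun f : {ffun 'I_(2*t) -> ctype L0} => f (Ordinal Ho)) HW.
  rewrite !ffunE /=.
  have := congr1 (fun f : {ffun 'I_n'.+1 -> ctype L0} => f (inord (4*t*j + 2*t + o))) (colY d).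
  have := congr1 (fun f : {ffun 'I_n'.+1 -> ctype L0} => f (inord (4*t*i + 2*t + o))) (colY d).
  by rewrite !ffunE => -> -> ->.
have Hd : 0 < d by rewrite /d subn_gt0.
set M := 4*t*d.
have EMd : M = 4*t*d by [].
have HM4 : 4*t <= M by rewrite /M leq_pmulr.
have EM : M = (M.-1).+1 by rewrite prednK //; lia.
set pi := 4*t*i + 2*t.
have Epi : pi = 4*t*i + 2*t by [].
have Epj : 4*t*j = 4*t*i + M by rewrite /M -mulnDr /d subnKC // ltnW.
have Hbj : 4*t*j + 4*t <= n'.+1.
  apply: leq_trans Hn; have := leq_mul (leqnn (4*t)) Hjr; rewrite mulnS; lia.
have valf : forall x, x < pi + M + 2*t -> nat_of_ord (inord x : 'I_n'.+1) = x.
  by move=> x Hx; rewrite inordK //; lia.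
pose Z := @Config S (M.-1).+1 (@cadj (M.-1).+1) (fun _ => s0)
             (fun v => pid n'.+1 t r sX (pi + v)).
have injX : forall a, injective (ident (Y (map h (iota a r)))).
  by move=> a; apply: pid_inj => //; apply: distS.
have ltZ : forall v : 'I_(M.-1).+1, nat_of_ord v < M.
  move=> v0; move: (ltn_ord v0); rewrite /=; lia.
have ltZ' : forall v : 'I_(nv Z), nat_of_ord v < M := ltZ.
have injZ : injective (ident Z).
  move=> v1 v2 /= E; apply: ord_inj.
  have H1 : pi + v1 < pi + M + 2*t by have := ltZ' v1; lia.
  have H2 : pi + v2 < pi + M + 2*t by have := ltZ' v2; lia.
  have := @injX d (inord (pi + v1)) (inord (pi + v2)); rewrite /= !valf // => /(_ E).
  by move/(congr1 (@nat_of_ord _)); rewrite !valf //; lia.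
have wfZ : well_formed Z by apply: cadj_wf => //; lia.
have hcZ : has_cycle Z by apply: cadj_cycle; lia.
pose mu : labeling Z := fun v => P X (inord (pi + v)).
have [v Hv] := Hsound Z wfZ hcZ mu.
move: Hv; apply/negP/negPn.
have transfer : forall (G : config S) (f : 'I_(M.-1).+1 -> 'I_(nv G))
    (R : nat -> 'I_(M.-1).+1 -> Prop), well_formed G -> acyclic G ->
  (forall v, R 0 v -> [/\ ident Z v = ident G (f v), state Z v = state G (f v)
                        & mu v = P G (f v)]) ->
  (forall k v, R k.+1 v -> [/\ R k v, (forall u, adj Z v u -> R k u)
                        & nbrs G (f v) = map f (nbrs Z v)]) ->
  R t v -> output A Z mu t v.
  move=> G f R wfG acG H0 HS Rv.
  have := @sim_local S Z G mu (P G) f R H0 HS t v Rv; move/(sim_run A).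
  by rewrite /output => ->; apply: Hcompl.
have valZ : forall w : 'I_(M.-1).+1, nat_of_ord (inord (pi + w) : 'I_n'.+1) = pi + w.
  by move=> w; rewrite valf //; have := ltZ w; lia.
have identX : forall w : 'I_(M.-1).+1, ident X (inord (pi + w)) = ident Z w.
  by move=> w; rewrite /= valZ.
have HZ2 : 2 < nv Z by rewrite /=; lia.
case: (boolP ((t <= v) && (v + t < M))) => Hreg.
  apply: (transfer X (fun u => inord (pi + u)) (fun k u => k <= u /\ u + k < M)).
  - exact: wfY.
  - exact: acY.
  - by move=> u _; split => //; rewrite identX.
  - move=> k u [H1 H2]; split.
    + lia.
    + move=> w /cnat_cases; have := ltZ w; have := ltZ' w; lia.
    + apply: local_nbrs; [exact: injZ|exact: injX|exact: HZ2|by []|by []| |].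
      * move=> w Hw; rewrite identX; split => //; rewrite !valZ.
        move: Hw; rewrite /=; case: eqP => E Hw; lia.
      * move=> w Hw; rewrite identX; split => //; rewrite !valZ.
        move: Hw; rewrite /=; case: eqP => E Hw; lia.
  - by case/andP: Hreg => ? ?; split.
pose g (u : nat) := if u < 2*t then pi + M + u else pi + u.
have valg : forall w : 'I_(M.-1).+1, nat_of_ord (inord (g w) : 'I_n'.+1) = g w.
  move=> w; rewrite valf //; have := ltZ w; rewrite /g; case: (ltnP w (2*t)) => ? ?; lia.
have identX' : forall w : 'I_(M.-1).+1, w < 2*t \/ M - 2*t <= w ->
    ident X' (inord (g w)) = ident Z w.
  move=> w Hw; rewrite /= valg /g; case: (ltnP w (2*t)) => Hw2.
  - have -> : pi + M + w = 4*t*j + 2*t + w by lia.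
    have -> : pi + w = 4*t*i + 2*t + w by lia.
    rewrite !pid_slot // !nthS // add0n.
    by have -> : d + i = j by rewrite Ed subnK // ltnW.
  - have E1 : pi + w = 4*t*j + (w + 2*t - M) by have := ltZ w; lia.
    by rewrite E1 !pid_fill //; have := ltZ w; lia.
have labelX' : forall w : 'I_(M.-1).+1, w < 2*t \/ M - 2*t <= w ->
    mu w = P X' (inord (g w)).
  move=> w Hw; rewrite LX /mu /g; case: (ltnP w (2*t)) => Hw2 //.
  have -> : pi + M + w = 4*t*j + 2*t + w by lia.
  by rewrite LP.
apply: (transfer X' (fun u => inord (g u)) (fun k u => u + k < 2*t \/ M - 2*t + k <= u)).
- exact: wfY.
- exact: acY.
- move=> u Hu; split => //; [rewrite identX' //; lia | apply: labelX'; lia].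
- move=> k u Hu; split.
  + lia.
  + move=> w /cnat_cases; have := ltZ w; have := ltZ' w; have := ltZ u; lia.
  + apply: local_nbrs; [exact: injZ|exact: injX|exact: HZ2|by []|by []| |].
    * move=> w Hw; have ew : @nat_of_ord (nv Z) w = @nat_of_ord (M.-1).+1 w := erefl.
      have eu : @nat_of_ord (nv Z) u = @nat_of_ord (M.-1).+1 u := erefl.
      rewrite identX'; last by move: Hw; rewrite /=; have := ltZ u; case: eqP => E Hw; lia.
      split => //; rewrite !valg /g; move: Hw; rewrite /=; have := ltZ u.
      case: eqP => E Hw Hu'; case: (ltnP w (2*t)); case: (ltnP u (2*t)); lia.
    * move=> w Hw; have ew : @nat_of_ord (nv Z) w = @nat_of_ord (M.-1).+1 w := erefl.
      have eu : @nat_of_ord (nv Z) u = @nat_of_ord (M.-1).+1 u := erefl.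
      rewrite identX'; last by move: Hw; rewrite /=; have := ltZ u; case: eqP => E Hw; lia.
      split => //; rewrite !valg /g; move: Hw; rewrite /=; have := ltZ u.
      case: eqP => E Hw Hu'; case: (ltnP w (2*t)); case: (ltnP u (2*t)); lia.
- have ev : @nat_of_ord (nv Z) v = @nat_of_ord (M.-1).+1 v := erefl.
  move: Hreg; rewrite negb_and -!ltnNge => /orP H; have := ltZ v; have := ltZ' v; lia.
Qed.


Theorem theorem3 (S : Type) (hS : inhabited S) :
  exists c : nat, 0 < c /\
  forall t : nat, 0 < t ->
  forall (P : prover S) (A : verifier S), tPLS_acyclic t P A ->
  exists N : nat, forall n : nat, N <= n ->
  exists G : config S,
    [/\ nv G = n, well_formed G, acyclic G &
        exists v : 'I_(nv G), trunc_log 2 n <= c * t * size (P G v)].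
Proof.
exists 8; split => // t Ht P A HP.
exists (32*t*t).+1 => -[//|n'] Hn.
apply: NNPP => Hno; case: hS => s0.
set T := trunc_log 2 n'.+1.
set L0 := T %/ (8*t).
have Hb : forall G : config S, nv G = n'.+1 -> well_formed G -> acyclic G ->
    forall v, size (P G v) <= L0.
  move=> G HG wf ac v; rewrite leqNgt; apply/negP => Hlt; apply: Hno.
  exists G; split => //; exists v.
  move: Hlt; rewrite /L0 ltn_divLR; last by lia.
  move=> H; rewrite -mulnA; lia.
apply: (main_contra s0 Ht HP Hb).
rewrite card_ffun card_prod card_ffun !card_ord card_bool.
set B := 2 ^ (4 * t * L0).
have H1 : ((L0.+1 * 2 ^ L0) ^ (2 * t)) <= B.
  rewrite /B; have : L0.+1 * 2 ^ L0 <= 2 ^ (2 * L0).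
    by rewrite mul2n -addnn expnD leq_mul2r ltn_expl // orbT.
  rewrite -(@leq_exp2r _ _ (2 * t)); last by lia.
  move=> H; apply: leq_trans H _; rewrite -expnM.
  by have -> : 2 * L0 * (2 * t) = 4 * t * L0 by lia.
have H2 : B * B <= n'.+1.
  have HT : 2 ^ T <= n'.+1 by apply: trunc_logP.
  apply: leq_trans HT; rewrite /B -expnD; apply: leq_pexp2l => //.
  have : L0 * (8 * t) <= T by rewrite /L0 leq_divM.
  clearbody L0 T; lia.
have H3 : 0 < B by rewrite expn_gt0.
move: H1; set K := (_ ^ (2 * t)) => H1.
clearbody K B L0 T.
have HK : 4*t*K.+1 <= 4*t*B.+1 by rewrite leq_mul2l ltnS H1 orbT.
case: (leqP (8*t) B) => HB.
  have H4 : 8*t*B <= B*B by rewrite leq_mul2r HB orbT.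
  have H5 : t <= t*B by rewrite leq_pmulr.
  lia.
have H4 : 4*t*B.+1 <= 4*t*(8*t) by rewrite leq_mul2l HB orbT.
lia.
Qed.
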